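(* Let $\theta_0:\mathbb{R}^d\to\mathbb{R}^{d_\theta}$ be measurable and for each $N\ge1$ let $\hat\theta_N$ be a (possibly random) $\mathbb{R}^{d_\theta}$-valued estimator built from data independent of $X^s,X^t$. Suppose (i) $\|\hat\theta_N(X^s)\|_\infty\le\xi_N$ a.s. for every $N\ge1$; (ii) $\mathbb{E}\|\theta_0(X^s)\|_\infty^8<\infty$; (iii) there are constants $c>0$, $m\ge0$ with $r_0(x)\le c(\|x\|_\infty^m+1)$ for all $x$; (iv) $\mathbb{E}[r_0(X^s)^2]<\infty$; (v) $\mathbb{E}\exp(\varsigma\|X^s\|_\infty)<\infty$ for some constant $\varsigma>0$. Then for $N\ge2$, $$\mathbb{E}\|\hat\theta_N(X^t)-\theta_0(X^t)\|_2^2=\mathbb{E}\big[\|\hat\theta_N(X^s)-\theta_0(X^s)\|_2^2r_0(X^s)\big]\le c_1(\log N)^m\,\mathbb{E}\|\hat\theta_N(X^s)-\theta_0(X^s)\|_2^2+\frac{c_2d_\theta(\xi_N^2+1)}{N},$$ with constants $c_1,c_2$ not depending on $N$.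
   Context: $X^s,X^t$ are random vectors in $\mathbb{R}^d$ with Lebesgue densities $p,q$, $\{q>0\}\subset\{p>0\}$, and density ratio $r_0=q/p$ (with $0/0=0$). Expectations are over both the test point and the randomness of $\hat\theta_N$. *)

(* Defs.v *)
From HB Require Import structures.
From mathcomp Require Import all_boot all_order all_algebra.
From mathcomp Require Import all_classical all_reals all_analysis.
Set Implicit Arguments. Unset Strict Implicit. Unset Printing Implicit Defensive.
Import Order.TTheory GRing.Theory Num.Theory.
Local Open Scope ring_scope.
Local Open Scope classical_set_scope.

(* R^n is modelled as n.-tuple R with its product (Borel) sigma-algebra. *)

Definition norminf (R : realType) (n : nat) (x : n.-tuple R) : R :=
  \big[Num.max/0]_(i < n) `|tnth x i|.

Definition norm2sq (R : realType) (n : nat) (x : n.-tuple R) : R :=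
  \sum_(i < n) (tnth x i) ^+ 2.

Definition tsub (R : realType) (n : nat) (x y : n.-tuple R) : n.-tuple R :=
  [tuple tnth x i - tnth y i | i < n].

(* lam is (the) Lebesgue measure on R^n: it gives every half-open box its
   volume (this characterises Lebesgue measure on the Borel sets). *)
Definition is_lebesgue_rV (R : realType) (n : nat)
  (lam : {measure set (n.-tuple R) -> \bar R}) : Prop :=
  forall a b : n.-tuple R, (forall i, tnth a i <= tnth b i) ->
    lam [set x | forall i, tnth a i < tnth x i <= tnth b i] =
    (\prod_(i < n) (tnth b i - tnth a i))%:E.

Definition is_density (R : realType) (n : nat)
  (lam : {measure set (n.-tuple R) -> \bar R}) (p : n.-tuple R -> R) : Prop :=
  measurable_fun setT p /\ (forall x, 0 <= p x) /\
  (\int[lam]_x (p x)%:E = 1)%E.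

(* density ratio r0 = q/p, with 0/0 = 0 (in MathComp, 0^-1 = 0) *)
Definition dratio (R : realType) (n : nat) (p q : n.-tuple R -> R)
  (x : n.-tuple R) : R := q x / p x.

(* Expectation of f(omega, X) where omega ~ P (the randomness of the
   estimator) is independent of X, and X has Lebesgue density p. *)
Definition Ejoint (R : realType) (d0 : measure_display) (Omega : measurableType d0)
  (P : probability Omega R) (n : nat)
  (lam : {measure set (n.-tuple R) -> \bar R}) (p : n.-tuple R -> R)
  (f : Omega -> n.-tuple R -> R) : \bar R :=
  (\int[P]_w \int[lam]_x (f w x * p x)%:E)%E.

Definition Edens (R : realType) (n : nat)
  (lam : {measure set (n.-tuple R) -> \bar R}) (p : n.-tuple R -> R)
  (g : n.-tuple R -> R) : \bar R :=
  (\int[lam]_x (g x * p x)%:E)%E.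

(* Main.v *)
Set Warnings "-notation-overridden,-ambiguous-paths,-notation-incompatible-prefix".
Require Import Defs.
From HB Require Import structures.
From mathcomp Require Import all_boot all_order all_algebra.
From mathcomp Require Import all_classical all_reals all_analysis.
From mathcomp Require Import measurable_realfun.
From mathcomp Require Import ring lra.
Import Order.TTheory GRing.Theory Num.Theory.
Local Open Scope ring_scope.
Local Open Scope classical_set_scope.
Set Implicit Arguments. Unset Strict Implicit.
Lemma measurable_invR (R : realType) : measurable_fun [set: R] (@GRing.inv R).
Proof.
have -> : [set: R] = [set x | x != 0] `|` [set 0].
  by apply/seteqP; split=> x //= _; case: (eqVneq x 0); [right|left].
apply/measurable_funU => //.
  by apply: open_measurable; exact: open_neq.
split.
  apply: open_continuous_measurable_fun; first exact: open_neq.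
  by move=> x; rewrite inE /= => x0; exact: inv_continuous.
exact: measurable_fun_set1.
Qed.

Lemma mbigmax (R : realType) d (T : measurableType d) n (g : 'I_n -> T -> R) :
  (forall i, measurable_fun setT (g i)) ->
  measurable_fun setT (fun t => \big[Num.max/0]_(i < n) g i t).
Proof.
elim: n g => [|n IH] g mg.
  under eq_fun do rewrite big_ord0; exact: measurable_cst.
have -> : (fun t => \big[Num.max/0]_(i < n.+1) g i t) =
  (fun t => Num.max (g ord0 t) (\big[Num.max/0]_(i < n) g (lift ord0 i) t)).
  by apply/funext => t; rewrite big_ord_recl.
apply: (@measurable_maxr _ _ _ setT (fun t => _) (fun t => _)); first exact: mg.
exact: (IH (fun i => g (lift ord0 i))).
Qed.

Lemma mnorminf (R : realType) d (T : measurableType d) n (f : T -> n.-tuple R) :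
  measurable_fun setT f -> measurable_fun setT (fun t => norminf (f t)).
Proof.
move=> mf; rewrite /norminf; apply: mbigmax => i.
apply: measurableT_comp; first exact: normr_measurable.
exact: (@measurableT_comp _ _ _ _ _ _ (fun x => tnth x i) _ f (measurable_tnth i) mf).
Qed.

Lemma mnorm2sq (R : realType) d (T : measurableType d) n (f g : T -> n.-tuple R) :
  measurable_fun setT f -> measurable_fun setT g ->
  measurable_fun setT (fun t => norm2sq (tsub (f t) (g t))).
Proof.
move=> mf mg; rewrite /norm2sq.
have -> : (fun t => \sum_(i < n) tnth (tsub (f t) (g t)) i ^+ 2) =
  (fun t => \sum_(i <- index_enum 'I_n) (tnth (f t) i - tnth (g t) i) ^+ 2).
  by apply/funext => t; apply: eq_bigr => i _; rewrite /tsub tnth_mktuple.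
apply: measurable_sum => i; apply: measurable_funX; apply: measurable_funB.
  exact: (@measurableT_comp _ _ _ _ _ _ (fun x => tnth x i) _ f (measurable_tnth i) mf).
exact: (@measurableT_comp _ _ _ _ _ _ (fun x => tnth x i) _ g (measurable_tnth i) mg).
Qed.

Lemma le_bigmax_seq (R : realType) (I : eqType) (s : seq I) (F : I -> R) i :
  i \in s -> F i <= \big[Num.max/0]_(j <- s) F j.
Proof.
elim: s => [//|a s IH]; rewrite inE big_cons => /orP[/eqP->|/IH h].
  by rewrite le_max lexx.
by rewrite le_max h orbT.
Qed.

Lemma bigmax_ge0_seq (R : realType) (I : eqType) (s : seq I) (F : I -> R) :
  0 <= \big[Num.max/0]_(j <- s) F j.
Proof.
elim: s => [|a s IH]; first by rewrite big_nil.
by rewrite big_cons le_max IH orbT.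
Qed.

Lemma tnth_le_norminf (R : realType) n (x : n.-tuple R) i :
  `|tnth x i| <= norminf x.
Proof. exact: (le_bigmax_seq (s:=index_enum _) (fun j => `|tnth x j|) (mem_index_enum i)). Qed.

Lemma norminf_ge0 (R : realType) n (x : n.-tuple R) : 0 <= norminf x.
Proof. exact: bigmax_ge0_seq. Qed.

Lemma measurable_forall (R : realType) n (P : 'I_n -> set (n.-tuple R)) :
  (forall i, measurable (P i)) -> measurable [set x | forall i, P i x].
Proof.
move=> mP.
have H : forall s : seq 'I_n, measurable [set x | forall i, i \in s -> P i x].
  elim => [|a s IH].
    by rewrite (_ : [set x | _] = setT)//; apply/seteqP; split => x.
  rewrite (_ : [set x | _] = P a `&` [set x | forall i, i \in s -> P i x]).
    exact: measurableI.
  apply/seteqP; split => x /=.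
    by move=> h; split; [apply: h; rewrite inE eqxx|move=> i hs; apply: h; rewrite inE hs orbT].
  by move=> [Pa h] i; rewrite inE => /orP[/eqP->//|]; exact: h.
rewrite (_ : [set x | _] = [set x | forall i, i \in enum 'I_n -> P i x]) //.
apply/seteqP; split => x /= h i.
  by move=> _; exact: h.
by apply: h; rewrite mem_enum.
Qed.

Lemma lam_sigma_finite (R : realType) n (lam : {measure set (n.-tuple R) -> \bar R}) :
  is_lebesgue_rV lam -> sigma_finite setT lam.
Proof.
move=> Hlam.
pose a (k : nat) : n.-tuple R := [tuple (- k%:R) | i < n].
pose b (k : nat) : n.-tuple R := [tuple (k%:R) | i < n].
exists (fun k => [set x | forall i, tnth (a k) i < tnth x i <= tnth (b k) i]).
  apply/seteqP; split => x // _.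
  exists (Num.Def.trunc (norminf x)).+1 => //= i.
  rewrite !tnth_mktuple.
  have h1 := tnth_le_norminf x i.
  have h2 := truncnS_gt (norminf x).
  have : `|tnth x i| < (Num.Def.trunc (norminf x)).+1%:R by exact: le_lt_trans h2.
  by rewrite ltr_norml => /andP[-> /ltW ->].
move=> k; split.
  apply: measurable_forall => i /=.
  have -> : (fun x : n.-tuple R => is_true (tnth (a k) i < tnth x i <= tnth (b k) i)) =
    (fun x => tnth x i) @^-1` `]tnth (a k) i, tnth (b k) i]%classic.
    by apply/seteqP; split => x /=; rewrite in_itv.
  rewrite -[X in measurable X]setTI.
  exact: (measurable_tnth i measurableT (measurable_itv _)).
rewrite Hlam ?ltry// => i; rewrite !tnth_mktuple.
by rewrite (le_trans (_ : _ <= 0))// ?oppr_le0// ler0n.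
Qed.

Definition sfm (R : realType) n (lam : {measure set (n.-tuple R) -> \bar R})
  (H : is_lebesgue_rV lam) : set (n.-tuple R) -> \bar R := lam.

HB.instance Definition _ (R : realType) n (lam : {measure set (n.-tuple R) -> \bar R})
  (H : is_lebesgue_rV lam) := Measure.copy (@sfm R n lam H) lam.

HB.instance Definition _ (R : realType) n (lam : {measure set (n.-tuple R) -> \bar R})
  (H : is_lebesgue_rV lam) :=
  @Measure_isSigmaFinite.Build _ _ _ (@sfm R n lam H) (lam_sigma_finite H).


Lemma sfm_integral (R : realType) n (lam : {measure set (n.-tuple R) -> \bar R})
  (H : is_lebesgue_rV lam) (f : n.-tuple R -> \bar R) :
  (\int[sfm H]_x f x = \int[lam]_x f x)%E.
Proof. reflexivity. Qed.

Lemma case2 (R : realType) (e r a y Nr D xi2 : R) :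
  0 <= e -> 0 <= r -> 0 <= a -> 0 <= D -> 0 <= xi2 -> 0 < Nr -> Nr < y ->
  e <= D * (xi2 + a) ->
  e * r <= D * (xi2 + 1) / Nr * (r ^+ 2 + 1 + y ^+ 4 + a ^+ 4).
Proof.
move=> e0 r0 a0 D0 x0 N0 Ny he.
set G := r ^+ 2 + 1 + y ^+ 4 + a ^+ 4.
have y0 : 0 <= y by apply: ltW; exact: lt_trans Ny.
have h1 : r <= G / Nr.
  rewrite ler_pdivlMr//.
  have : r * Nr <= r * y by rewrite ler_wpM2l// ltW.
  have := sqr_ge0 (r - y); have := sqr_ge0 (y ^+ 2 - 1).
  rewrite /G; nra.
have h2 : a * r <= G / Nr.
  rewrite ler_pdivlMr//.
  have : a * r * Nr <= a * r * y by rewrite ler_wpM2l ?mulr_ge0// ltW.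
  have := sqr_ge0 (a ^+ 2 - y ^+ 2); have := sqr_ge0 (r - a * y).
  have := mulr_ge0 a0 y0.
  rewrite /G; nra.
have -> : D * (xi2 + 1) / Nr * G = D * (xi2 * (G / Nr) + G / Nr).
  by field; rewrite gt_eqF.
apply: (le_trans (ler_wpM2r r0 he)).
rewrite -mulrA ler_wpM2l// mulrDl.
apply: lerD => //; exact: ler_wpM2l.
Qed.

Lemma case1 (R : realType) (nx r c m vs Nr : R) :
  0 < c -> 0 <= m -> 0 < vs -> 2 <= Nr -> 0 <= nx ->
  r <= c * (nx `^ m + 1) -> expR (vs * nx / 4) <= Nr ->
  r <= c * ((4 / vs) `^ m + (ln 2 `^ m)^-1) * ln Nr `^ m.
Proof.
move=> c0 m0 vs0 N2 nx0 hr he.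
have N0 : 0 < Nr by apply: lt_le_trans N2.
have ln20 : 0 < ln (2 : R) by apply: ln_gt0; lra.
have lnN : ln (2 : R) <= ln Nr.
  by rewrite ler_ln// posrE; lra.
have l0 : 0 <= ln Nr by exact: le_trans (ltW ln20) lnN.
have h1 : vs * nx / 4 <= ln Nr by rewrite -ler_expR lnK// posrE.
have h2 : nx <= 4 / vs * ln Nr.
  have -> : 4 / vs * ln Nr = (ln Nr * 4) / vs by field; rewrite gt_eqF.
  by rewrite ler_pdivlMr//; lra.
have h3 : nx `^ m <= (4 / vs) `^ m * ln Nr `^ m.
  rewrite -powRM ?divr_ge0 ?(ltW vs0)//.
  apply: ge0_ler_powR => //; rewrite nnegrE//.
  by apply: mulr_ge0; [rewrite divr_ge0 ?ltW|].
have h4 : 1 <= (ln 2 `^ m)^-1 * ln Nr `^ m.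
  have p0 : 0 < ln (2 : R) `^ m by apply: powR_gt0.
  rewrite mulrC ler_pdivlMr// mul1r.
  by apply: ge0_ler_powR => //; rewrite nnegrE ltW//; exact: lt_le_trans lnN.
apply: (le_trans hr); rewrite -mulrA ler_pM2l// mulrDl.
exact: lerD.
Qed.

Lemma err_bound (R : realType) n (t th : n.-tuple R) xi :
  norminf t <= xi ->
  norm2sq (tsub t th) <= 2 * n%:R * (xi ^+ 2 + norminf th ^+ 2).
Proof.
move=> ht; rewrite /norm2sq.
apply: (le_trans (y := \sum_(i < n) (2 * (xi ^+ 2 + norminf th ^+ 2)))).
  apply: ler_sum => i _; rewrite /tsub tnth_mktuple.
  have := le_trans (tnth_le_norminf t i) ht; rewrite ler_norml => /andP[h1 h2].
  have := tnth_le_norminf th i; rewrite ler_norml => /andP[h3 h4].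
  set a := tnth t i in h1 h2 *; set b := tnth th i in h3 h4 *.
  have z1 : 0 <= (xi - a) * (a + xi) by apply: mulr_ge0; lra.
  have z2 : 0 <= (norminf th - b) * (b + norminf th) by apply: mulr_ge0; lra.
  have z3 := sqr_ge0 (a + b).
  nra.
by rewrite sumr_const card_ord -mulr_natl; lra.
Qed.

Lemma norm2sq_ge0 (R : realType) n (x : n.-tuple R) : 0 <= norm2sq x.
Proof. by apply: sumr_ge0 => i _; exact: sqr_ge0. Qed.

Lemma pw (R : realType) d dt (t th : dt.-tuple R) (x : d.-tuple R)
    (r c m vs Nr xi : R) :
  0 < c -> 0 <= m -> 0 < vs -> 2 <= Nr -> 0 <= r ->
  r <= c * (norminf x `^ m + 1) -> norminf t <= xi ->
  norm2sq (tsub t th) * r <=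
    c * ((4 / vs) `^ m + (ln 2 `^ m)^-1) * ln Nr `^ m * norm2sq (tsub t th)
  + 2 * dt%:R * (xi ^+ 2 + 1) / Nr *
      (r ^+ 2 + 1 + expR (vs * norminf x) + norminf th ^+ 8).
Proof.
move=> c0 m0 vs0 N2 r0 hr ht.
have e0 := norm2sq_ge0 (tsub t th).
have xi0 : 0 <= xi := le_trans (norminf_ge0 t) ht.
have N0 : 0 < Nr by apply: lt_le_trans N2.
have G0 : 0 <= r ^+ 2 + 1 + expR (vs * norminf x) + norminf th ^+ 8.
  by rewrite !addr_ge0 ?sqr_ge0 ?expR_ge0 ?exprn_ge0 ?norminf_ge0.
have A0 : 0 <= c * ((4 / vs) `^ m + (ln 2 `^ m)^-1) * ln Nr `^ m.
  by rewrite !mulr_ge0 ?addr_ge0 ?invr_ge0 ?powR_ge0 ?ltW.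
have B0 : 0 <= 2 * dt%:R * (xi ^+ 2 + 1) / Nr.
  by apply: divr_ge0; [rewrite !mulr_ge0 ?addr_ge0 ?sqr_ge0|exact: ltW].
case: (leP (expR (vs * norminf x / 4)) Nr) => h.
  have := case1 c0 m0 vs0 N2 (norminf_ge0 x) hr h => hA.
  rewrite -[X in X <= _]addr0; apply: lerD; last exact: mulr_ge0.
  by rewrite [X in _ <= X]mulrC; apply: ler_wpM2l.
rewrite -[X in X <= _]add0r; apply: lerD; first exact: mulr_ge0.
have -> : expR (vs * norminf x) = expR (vs * norminf x / 4) ^+ 4.
  by rewrite -expRM_natr; congr expR; rewrite -mulrA mulVf ?mulr1.
have -> : norminf th ^+ 8 = (norminf th ^+ 2) ^+ 4 by rewrite -exprM.
apply: case2 => //; rewrite ?sqr_ge0 ?mulr_ge0//.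
exact: err_bound.
Qed.

Lemma mPhi (R : realType) n (lam : {measure set (n.-tuple R) -> \bar R})
  (H : is_lebesgue_rV lam) d0 (Omega : measurableType d0)
  (f : Omega * n.-tuple R -> R) :
  measurable_fun setT f -> (forall z, 0 <= f z) ->
  measurable_fun setT (fun w => (\int[lam]_x (f (w, x))%:E)%E).
Proof.
move=> mf f0.
have := @measurable_fun_fubini_tonelli_F _ _ Omega _ R (sfm H) (fun z => (f z)%:E).
apply; first exact/measurable_EFinP.
by move=> z; rewrite lee_fin.
Qed.

Lemma ae_zero_of_int d (T : measurableType d) (R : realType)
  (mu : {measure set T -> \bar R}) (f : T -> \bar R) :
  measurable_fun setT f -> (forall x, (0 <= f x)%E) -> (\int[mu]_x f x = 0)%E ->
  {ae mu, forall x, setT x -> f x = 0%E}.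
Proof.
move=> mf f0 h.
have : (\int[mu]_x `|f x| = 0)%E.
  by rewrite -h; apply: eq_integral => x _; rewrite gee0_abs.
by move/(ae_eq_integral_abs mu measurableT mf).
Qed.

Lemma ge0M3 (R : realType) (a b c : R) : 0 <= a -> 0 <= b -> 0 <= c -> 0 <= a * b * c.
Proof. by move=> *; rewrite !mulr_ge0. Qed.

Unset Implicit Arguments.

Theorem proposition4p3 (R : realType) (d dtheta : nat)
  (lam : {measure set (d.-tuple R) -> \bar R})
  (Hlam : is_lebesgue_rV lam)
  (p q : d.-tuple R -> R)
  (Hp : is_density lam p) (Hq : is_density lam q)
  (Hsupp : forall x, 0 < q x -> 0 < p x)
  (theta0 : d.-tuple R -> dtheta.-tuple R)
  (Htheta0 : measurable_fun setT theta0)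
  (d0 : measure_display) (Omega : measurableType d0) (P : probability Omega R)
  (thetahat : nat -> Omega -> d.-tuple R -> dtheta.-tuple R)
  (Hthetahat : forall N, measurable_fun setT
                 (fun z : Omega * d.-tuple R => thetahat N z.1 z.2))
  (xi : nat -> R)
  (Hi : forall N, (1 <= N)%N ->
     Ejoint P lam p
       (fun w x => if xi N < norminf (thetahat N w x) then 1 else 0) = 0%E)
  (Hii : (Edens lam p (fun x => (norminf (theta0 x) ^+ 8)%R) < +oo)%E)
  (c m : R) (Hc : 0 < c) (Hm : 0 <= m)
  (Hiii : forall x, dratio p q x <= c * (norminf x `^ m + 1))
  (Hiv : (Edens lam p (fun x => (dratio p q x ^+ 2)%R) < +oo)%E)
  (Hv : exists vs : R, 0 < vs /\
     (Edens lam p (fun x => expR (vs * norminf x)%R) < +oo)%E) :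
  exists c1 c2 : R, forall N : nat, (2 <= N)%N ->
    let err := fun w x => norm2sq (tsub (thetahat N w x) (theta0 x)) in
    Ejoint P lam q err = Ejoint P lam p (fun w x => (err w x * dratio p q x)%R) /\
    (Ejoint P lam p (fun w x => (err w x * dratio p q x)%R) <=
       (c1 * ln N%:R `^ m)%R%:E * Ejoint P lam p err +
       (c2 * dtheta%:R * (xi N ^+ 2 + 1) / N%:R)%R%:E)%E.
Proof.
move: Hp Hq => [mp [p0 intp]] [mq [q0 intq]].
case: Hv => vs [vs0 Hvs].
have Hpq : forall x, q x = dratio p q x * p x.
  move=> x; rewrite /dratio; have [e|px0] := eqVneq (p x) 0.
    rewrite e mulr0; apply/eqP; rewrite eq_le q0 andbT.
    by rewrite leNgt; apply/negP => /Hsupp; rewrite e ltxx.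
  by rewrite divfK.
have r0 : forall x, 0 <= dratio p q x.
  by move=> x; rewrite /dratio divr_ge0.
have mr : measurable_fun setT (dratio p q).
  have -> : dratio p q = q \* (GRing.inv \o p) by [].
  apply: measurable_funM => //; apply: measurableT_comp mp; exact: measurable_invR.
pose G x := dratio p q x ^+ 2 + 1 + expR (vs * norminf x) + norminf (theta0 x) ^+ 8.
have G0 : forall x, 0 <= G x.
  by move=> x; rewrite /G !addr_ge0 ?sqr_ge0 ?expR_ge0 ?exprn_ge0 ?norminf_ge0.
have mnx : measurable_fun setT (fun x : d.-tuple R => norminf x).
  exact: (mnorminf (f := id)).
have mG1 : measurable_fun setT (fun x => dratio p q x ^+ 2 * p x).
  exact: measurable_funM (measurable_funX _ mr) mp.
have mG2 : measurable_fun setT (fun x => 1 * p x).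
  exact: measurable_funM (measurable_cst _) mp.
have mvx : measurable_fun setT (fun x : d.-tuple R => vs * norminf x).
  apply: measurable_funM; last exact: mnx.
  exact: measurable_cst.
have mG3 : measurable_fun setT (fun x => expR (vs * norminf x) * p x).
  apply: measurable_funM; last exact: mp.
  exact: (measurableT_comp (@measurable_expR R) mvx).
have mG4 : measurable_fun setT (fun x => norminf (theta0 x) ^+ 8 * p x).
  exact: measurable_funM (measurable_funX _ (mnorminf Htheta0)) mp.
have mG : measurable_fun setT G.
  rewrite /G; apply: measurable_funD; last exact: measurable_funX _ (mnorminf Htheta0).
  apply: measurable_funD; last exact: (measurableT_comp (@measurable_expR R) mvx).
  apply: measurable_funD; last exact: measurable_cst.
  exact: measurable_funX _ mr.
have mGp : measurable_fun setT (fun x => G x * p x) by exact: measurable_funM.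
pose EG := (\int[lam]_x (G x * p x)%:E)%E.
have EGfin : EG \is a fin_num.
  rewrite ge0_fin_numE; last by apply: integral_ge0 => x _; rewrite lee_fin mulr_ge0.
  rewrite /EG /G.
  under eq_integral do rewrite !mulrDl !EFinD.
  rewrite ge0_integralD//; last 4 first.
  - by move=> x _; rewrite !adde_ge0// lee_fin mulr_ge0// ?sqr_ge0 ?expR_ge0.
  - apply: emeasurable_funD; [apply: emeasurable_funD|];
      exact/measurable_EFinP.
  - by move=> x _; rewrite lee_fin mulr_ge0 ?exprn_ge0 ?norminf_ge0.
  - exact/measurable_EFinP.
  rewrite ge0_integralD//; last 4 first.
  - by move=> x _; rewrite !adde_ge0// lee_fin mulr_ge0// ?sqr_ge0.
  - by apply: emeasurable_funD; exact/measurable_EFinP.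
  - by move=> x _; rewrite lee_fin mulr_ge0 ?expR_ge0.
  - exact/measurable_EFinP.
  rewrite ge0_integralD//; last 4 first.
  - by move=> x _; rewrite lee_fin mulr_ge0// ?sqr_ge0.
  - exact/measurable_EFinP.
  - by move=> x _; rewrite lee_fin mulr_ge0.
  - exact/measurable_EFinP.
  under [X in (_ + X + _ + _)%E]eq_integral do rewrite mul1r.
  have ip : (\int[lam]_x (p x)%:E = 1)%E := intp.
  rewrite ip.
  apply: lte_add_pinfty; [apply: lte_add_pinfty; [apply: lte_add_pinfty|]|].
  - exact: Hiv.
  - exact: ltry.
  - exact: Hvs.
  - exact: Hii.
pose EGr := fine EG.
exists (c * ((4 / vs) `^ m + (ln 2 `^ m)^-1)), (2 * EGr).
move=> N N2 err.
split.
  rewrite /Ejoint; apply: eq_integral => w _; apply: eq_integral => x _.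
  by rewrite Hpq mulrA.
have N2r : (2 : R) <= N%:R by rewrite ler_nat.
set A := c * ((4 / vs) `^ m + (ln 2 `^ m)^-1) * ln N%:R `^ m.
set B := 2 * dtheta%:R * (xi N ^+ 2 + 1) / N%:R.
have A0 : 0 <= A.
  by rewrite /A !mulr_ge0 ?addr_ge0 ?invr_ge0 ?powR_ge0 ?ltW.
have B0 : 0 <= B.
  apply: divr_ge0; [rewrite !mulr_ge0 ?addr_ge0 ?sqr_ge0//|].
  by apply: ltW; apply: lt_le_trans N2r.
have mth := Hthetahat N.
have merr : measurable_fun setT (fun z : Omega * d.-tuple R => err z.1 z.2).
  exact: (mnorm2sq mth (measurableT_comp Htheta0 measurable_snd)).
have mp2 : measurable_fun setT (fun z : Omega * d.-tuple R => p z.2).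
  exact: (measurableT_comp mp measurable_snd).
have mr2 : measurable_fun setT (fun z : Omega * d.-tuple R => dratio p q z.2).
  exact: (measurableT_comp mr measurable_snd).
pose bad (w : Omega) (x : d.-tuple R) : R :=
  if xi N < norminf (thetahat N w x) then 1 else 0.
have mbad : measurable_fun setT (fun z : Omega * d.-tuple R => bad z.1 z.2).
  apply: measurable_fun_ifT.
  - apply: measurable_fun_ltr; first exact: measurable_cst.
    exact: (mnorminf mth).
  - exact: measurable_cst.
  - exact: measurable_cst.
have bad0 : forall w x, 0 <= bad w x by move=> w x; rewrite /bad; case: ifP.
have err0 : forall w x, 0 <= err w x by move=> w x; exact: norm2sq_ge0.
pose Phib w := (\int[lam]_x (bad w x * p x)%:E)%E.
have Hgood : {ae P, forall w, setT w -> Phib w = 0%E}.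
  apply: ae_zero_of_int.
  - apply: (mPhi Hlam (f := fun z => bad z.1 z.2 * p z.2)).
      exact: measurable_funM.
    by move=> z; apply: mulr_ge0; auto.
  - by move=> w; apply: integral_ge0 => x _; rewrite lee_fin; apply: mulr_ge0; auto.
  - exact: (Hi N (ltnW N2)).
have Hin : forall w, Phib w = 0%E ->
  (\int[lam]_x (err w x * dratio p q x * p x)%:E <=
   A%:E * \int[lam]_x (err w x * p x)%:E + B%:E * EG)%E.
  move=> w hw.
  have mbadw : measurable_fun setT (fun x => bad w x * p x).
    apply: measurable_funM; last exact: mp.
    exact: (measurable_fun_pair2 w mbad).
  have merrw : measurable_fun setT (fun x => err w x).
    exact: (measurable_fun_pair2 w merr).
  have ae0 : {ae lam, forall x, setT x -> (bad w x * p x)%:E = 0%E}.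
    apply: ae_zero_of_int => //.
    - exact/measurable_EFinP.
    - by move=> x; rewrite lee_fin; apply: mulr_ge0; auto.
  apply: (le_trans (y := \int[lam]_x (A * (err w x * p x) + B * (G x * p x))%:E)%E).
    apply: ae_ge0_le_integral => //.
    - by move=> x _; rewrite lee_fin; apply: ge0M3; auto.
    - apply/measurable_EFinP; apply: measurable_funM => //.
      exact: measurable_funM.
    - by move=> x _; rewrite lee_fin; apply: addr_ge0; apply: mulr_ge0; auto; apply: mulr_ge0; auto.
    - apply/measurable_EFinP; apply: measurable_funD.
        apply: measurable_funM; first exact: measurable_cst.
        exact: measurable_funM.
      apply: measurable_funM; first exact: measurable_cst.
      exact: mGp.
    - apply: filterS ae0 => x h _; rewrite lee_fin.
      move: (h I); rewrite /bad; case: ltP => hb.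
        move=> /eqP; rewrite eqe mul1r => /eqP ->.
        by rewrite !mulr0 addr0.
      move=> _.
      have := pw (theta0 x) Hc Hm vs0 N2r (r0 x) (Hiii x) hb.
      move=> /(ler_wpM2r (p0 x)); rewrite mulrDl -!mulrA.
      by rewrite /G.
  rewrite (eq_integral (fun x => A%:E * (err w x * p x)%:E + B%:E * (G x * p x)%:E)%E);
    last by move=> x _; rewrite EFinD !EFinM.
  rewrite ge0_integralD//; last 4 first.
  - by move=> x _; apply: mule_ge0; rewrite ?lee_fin; auto; apply: mulr_ge0; auto.
  - apply: measurable_funeM; apply/measurable_EFinP; exact: measurable_funM.
  - by move=> x _; apply: mule_ge0; rewrite ?lee_fin; auto; apply: mulr_ge0; auto.
  - apply: measurable_funeM; apply/measurable_EFinP; exact: mGp.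
  rewrite ge0_integralZl//; last 2 first.
  - apply/measurable_EFinP; exact: measurable_funM.
  - by move=> x _; rewrite lee_fin; apply: mulr_ge0; auto.
  rewrite ge0_integralZl//; last 2 first.
  - exact/measurable_EFinP.
  - by move=> x _; rewrite lee_fin; apply: mulr_ge0; auto.
have mPerr : measurable_fun setT (fun w => (\int[lam]_x (err w x * p x)%:E)%E).
  apply: (mPhi Hlam (f := fun z => err z.1 z.2 * p z.2)).
    exact: measurable_funM.
  by move=> z; apply: mulr_ge0; auto.
have mPlhs : measurable_fun setT
    (fun w => (\int[lam]_x (err w x * dratio p q x * p x)%:E)%E).
  apply: (mPhi Hlam (f := fun z => err z.1 z.2 * dratio p q z.2 * p z.2)).
    by apply: measurable_funM => //; exact: measurable_funM.
  by move=> z; apply: ge0M3; auto.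
have EGE : EG = EGr%:E by rewrite /EGr fineK.
rewrite /Ejoint.
apply: (le_trans (y := \int[P]_w (A%:E * \int[lam]_x (err w x * p x)%:E + (B * EGr)%:E))%E).
  apply: ae_ge0_le_integral => //.
  - by move=> w _; apply: integral_ge0 => x _; rewrite lee_fin; apply: ge0M3; auto.
  - by move=> w _; apply: adde_ge0; [apply: mule_ge0; rewrite ?lee_fin//; apply: integral_ge0 => x _; rewrite lee_fin; apply: mulr_ge0; auto|rewrite lee_fin; apply: mulr_ge0; rewrite ?fine_ge0//; rewrite /EG; apply: integral_ge0 => x _; rewrite lee_fin; apply: mulr_ge0; auto].
  - apply: emeasurable_funD; first exact: measurable_funeM.
    exact: measurable_cst.
  - apply: filterS Hgood => w hw _.
    by rewrite [(B * EGr)%:E]EFinM -EGE; exact: Hin (hw I).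
rewrite ge0_integralD; last 5 first.
- exact: measurableT.
- by move=> w _; apply: mule_ge0; rewrite ?lee_fin//; apply: integral_ge0 => x _; rewrite lee_fin; apply: mulr_ge0; auto.
- exact: measurable_funeM.
- by move=> w _; rewrite lee_fin; apply: mulr_ge0; rewrite ?fine_ge0//; rewrite /EG; apply: integral_ge0 => x _; rewrite lee_fin; apply: mulr_ge0; auto.
- exact: measurable_cst.
rewrite ge0_integralZl//; last first.
  by move=> w _; apply: integral_ge0 => x _; rewrite lee_fin; apply: mulr_ge0; auto.
rewrite integral_cst// [X in ((B * EGr)%:E * X)%E](_ : _ = 1%E); last first.
  exact: probability_setT.
rewrite mule1.
apply: leeD => //.
rewrite lee_fin le_eqVlt; apply/orP; left; apply/eqP.
rewrite /B; field.
by rewrite gt_eqF// (lt_le_trans _ N2r).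
Qed.
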